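(* Let $\delta_W,\delta_X,\delta_Y,\delta_Z\in\mathbb{Z}$ with $\delta_W+\delta_X+\delta_Y+\delta_Z\ne 0$, and let $\ell=\max(|\delta_W|,|\delta_X|,|\delta_Y|,|\delta_Z|)$. Consider four tests $A,B,C,D$ (rows, in this order) and four persons $W,X,Y,Z$ (columns) and the $4\times 4$ schedule matrix $S$ defined as follows. Each person occupies exactly two tests: $X$ is in $A$ and $B$, $Y$ is in $B$ and $C$, $Z$ is in $C$ and $D$, $W$ is in $D$ and $A$; all other entries are $\infty$. For a person $P$ occupying the ordered pair of tests $(U,V)\in\{(A,B),(B,C),(C,D),(D,A)\}$ (for $P=X,Y,Z,W$ respectively), set $S_{U,P}=\max(0,-\delta_P)$ and $S_{V,P}=\max(0,\delta_P)$ (so that $S_{V,P}-S_{U,P}=\delta_P$). Then $S$ is a $(4,4,2)$-tropical code within maximum delay $\ell$.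
   Context: Tropical arithmetic on $\mathbb{R}\cup\{\infty\}$: $x\oplus y=\min(x,y)$, $x\odot y=x+y$, with $x\oplus\infty=x$ and $x\odot\infty=\infty$. For a matrix $S$ with $T$ rows and $N$ columns and a column vector $\mathbf{x}$ of length $N$, $S\odot\mathbf{x}$ is the vector whose $t$-th entry is $\min_{j}(S_{tj}+x_j)$. A $(T,N,D)$-tropical code is a matrix $S\in(\{0\}\cup\mathbb{N}\cup\{\infty\})^{T\times N}$ such that for any two distinct vectors $\mathbf{x},\mathbf{y}\in(\{0\}\cup\mathbb{N}\cup\{\infty\})^{N}$, each having at most $D$ finite entries, $S\odot\mathbf{x}\ne S\odot\mathbf{y}$. It is within maximum delay $\ell$ if $S\in\{0,1,\dots,\ell,\infty\}^{T\times N}$. *)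

(* Defs.v *)
From mathcomp Require Import all_boot all_order all_algebra.
Set Implicit Arguments. Unset Strict Implicit. Unset Printing Implicit Defensive.
Import Order.TTheory GRing.Theory Num.Theory.

(* Tropical values {0} ∪ N ∪ {∞}: [Some n] is the finite value n, [None] is ∞. *)
Definition tval := option nat.

Definition tmul (x y : tval) : tval :=
  match x, y with Some a, Some b => Some (a + b)%N | _, _ => None end.

Definition tadd (x y : tval) : tval :=
  match x, y with
  | Some a, Some b => Some (minn a b)
  | Some a, None => Some a
  | None, _ => y
  end.

Definition tmulmx (T N : nat) (S : 'M[tval]_(T, N)) (x : {ffun 'I_N -> tval})
  : {ffun 'I_T -> tval} :=
  [ffun t => foldr tadd None [seq tmul (S t j) (x j) | j <- enum 'I_N]].

Definition nfinite (N : nat) (x : {ffun 'I_N -> tval}) : nat :=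
  #|[pred j | x j != None]|.

Definition tropical_code (T N D : nat) (S : 'M[tval]_(T, N)) : Prop :=
  forall x y : {ffun 'I_N -> tval},
    (nfinite x <= D)%N -> (nfinite y <= D)%N -> x != y ->
    tmulmx S x != tmulmx S y.

Definition within_delay (T N : nat) (S : 'M[tval]_(T, N)) (l : nat) : Prop :=
  forall i j, match S i j with Some a => (a <= l)%N | None => true end.

Definition posp (d : int) : nat := absz (Num.max 0%R d).

(* Rows A,B,C,D = 0,1,2,3; columns W,X,Y,Z = 0,1,2,3.
   X occupies (A,B), Y (B,C), Z (C,D), W (D,A); for pair (U,V) of person P:
   S_{U,P} = max(0,-dP), S_{V,P} = max(0,dP). *)
Definition schedule4 (dW dX dY dZ : int) : 'M[tval]_(4, 4) :=
  \matrix_(i < 4, j < 4)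
    match nat_of_ord i, nat_of_ord j with
    | 0, 0 => Some (posp dW)
    | 3, 0 => Some (posp (- dW)%R)
    | 0, 1 => Some (posp (- dX)%R)
    | 1, 1 => Some (posp dX)
    | 1, 2 => Some (posp (- dY)%R)
    | 2, 2 => Some (posp dY)
    | 2, 3 => Some (posp (- dZ)%R)
    | 3, 3 => Some (posp dZ)
    | _, _ => None
    end.

(* Main.v *)
Require Import Defs.
From mathcomp Require Import all_boot all_order all_algebra zify.
Import Order.TTheory GRing.Theory Num.Theory.
Lemma enum4 : enum 'I_4 = [:: @Ordinal 4 0 isT; @Ordinal 4 1 isT; @Ordinal 4 2 isT; @Ordinal 4 3 isT].
Proof. by apply: (inj_map val_inj); rewrite val_enum_ord. Qed.
Lemma nf4 (x : {ffun 'I_4 -> option nat}) : nfinite x = ((x (@Ordinal 4 0 isT) != None) + (x (@Ordinal 4 1 isT) != None) + (x (@Ordinal 4 2 isT) != None) + (x (@Ordinal 4 3 isT) != None))%N.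
Proof. rewrite /nfinite cardE /enum_mem -enumT enum4 /= !inE.
 by case: (x (@Ordinal 4 0 isT)) => [?|]; case: (x (@Ordinal 4 1 isT)) => [?|];
  case: (x (@Ordinal 4 2 isT)) => [?|]; case: (x (@Ordinal 4 3 isT)) => [?|]. Qed.
Local Open Scope ring_scope.
Lemma pospE d : (posp d : int) = Num.max 0 d.
Proof. by rewrite /posp gez0_abs // le_max lexx. Qed.
Lemma posp_sub d : ((posp d)%:Z - (posp (- d))%:Z = d)%R.
Proof. rewrite !pospE. lia. Qed.

Lemma code (dW dX dY dZ : int) : (dW + dX + dY + dZ != 0)%R ->
  tropical_code 2 (schedule4 dW dX dY dZ).
Proof.
move=> Hs x y Hx Hy; apply: contraNN => /eqP E; apply/eqP.
have E0 := congr1 (fun f : {ffun 'I_4 -> option nat} => f (@Ordinal 4 0 isT)) E.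
have E1 := congr1 (fun f : {ffun 'I_4 -> option nat} => f (@Ordinal 4 1 isT)) E.
have E2 := congr1 (fun f : {ffun 'I_4 -> option nat} => f (@Ordinal 4 2 isT)) E.
have E3 := congr1 (fun f : {ffun 'I_4 -> option nat} => f (@Ordinal 4 3 isT)) E.
rewrite /tmulmx !ffunE enum4 /= !mxE /= in E0 E1 E2 E3.
rewrite !nf4 in Hx Hy.
suff : [/\ x (@Ordinal 4 0 isT) = y (@Ordinal 4 0 isT), x (@Ordinal 4 1 isT) = y (@Ordinal 4 1 isT),
   x (@Ordinal 4 2 isT) = y (@Ordinal 4 2 isT) & x (@Ordinal 4 3 isT) = y (@Ordinal 4 3 isT)].
  case=> h0 h1 h2 h3; apply/ffunP => -[[|[|[|[|k]]]] Hk] //;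
  by rewrite (bool_irrelevance Hk isT).
have hW := posp_sub dW; have hX := posp_sub dX; have hY := posp_sub dY; have hZ := posp_sub dZ.
move: E0 E1 E2 E3 Hx Hy hW hX hY hZ.
move: (posp dW) (posp (-dW)) (posp dX) (posp (-dX)) (posp dY) (posp (-dY)) (posp dZ) (posp (-dZ)) => bW aW bX aX bY aY bZ aZ.
case: (x (@Ordinal 4 0 isT)) => [x0|]; case: (x (@Ordinal 4 1 isT)) => [x1|];
case: (x (@Ordinal 4 2 isT)) => [x2|]; case: (x (@Ordinal 4 3 isT)) => [x3|];
case: (y (@Ordinal 4 0 isT)) => [y0|]; case: (y (@Ordinal 4 1 isT)) => [y1|];
case: (y (@Ordinal 4 2 isT)) => [y2|]; case: (y (@Ordinal 4 3 isT)) => [y3|] => //= E0 E1 E2 E3 Hx Hy hW hX hY hZ;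
  try (move: E0 => [] E0); try (move: E1 => [] E1); try (move: E2 => [] E2); try (move: E3 => [] E3);
  (split; try reflexivity; try f_equal; lia).
Qed.
Lemma posp_le d : (posp d <= `|d|)%N /\ (posp (-d) <= `|d|)%N.
Proof. have h1 := pospE d; have h2 := pospE (-d); split; lia. Qed.
Theorem mainTheorem4 (dW dX dY dZ : int) :
  (dW + dX + dY + dZ != 0)%R ->
  let l := maxn (maxn `|dW|%N `|dX|%N) (maxn `|dY|%N `|dZ|%N) in
  tropical_code 2 (schedule4 dW dX dY dZ) /\ within_delay (schedule4 dW dX dY dZ) l.
Proof.
move=> Hs l; split; first exact: code.
move=> i j; rewrite mxE /l.
case: (posp_le dW) (posp_le dX) (posp_le dY) (posp_le dZ) => [? ?] [? ?] [? ?] [? ?].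
by case: i => [[|[|[|[|i]]]] Hi]; case: j => [[|[|[|[|j]]]] Hj] //=; lia.
Qed.
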